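(* Let $(a_{ij})_{i,j=1}^s$, $(b_i)_{i=1}^s$ be the coefficients of an $s$-stage Runge–Kutta scheme with all $b_i\neq 0$, and set $c_i=\sum_{j}a_{ij}$, $d_j=\sum_i b_i a_{ij}$. Assume the simplifying assumption $D(1)$ holds, i.e. $d_j=b_j(1-c_j)$ for all $j=1,\dots,s$. (i) If the scheme satisfies the classical order conditions up to order three, then it satisfies the additional order-three condition $\sum_i \frac{d_i^2}{b_i}=\frac13$. (ii) If the scheme satisfies the classical order conditions up to order four, then it satisfies, in addition, the additional order-four conditions $$\sum_i c_i\frac{d_i^2}{b_i}=\frac1{12},\quad \sum_i\frac{d_i^3}{b_i^2}=\frac14,\quad \sum_{i,j}\frac{b_i}{b_j}c_i a_{ij}d_j=\frac5{24},\quad \sum_{i,j}\frac{d_i}{b_j}a_{ij}d_j=\frac18.$$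
   Context: All sums run from $1$ to $s$. The classical order conditions (for an ODE $y'=f(y)$) up to order four are: $\sum b_i=1$; $\sum d_i=\frac12$; $\sum c_id_i=\frac16$, $\sum b_ic_i^2=\frac13$; $\sum b_ic_i^3=\frac14$, $\sum b_ic_ia_{ij}c_j=\frac18$, $\sum d_ic_i^2=\frac1{12}$, $\sum d_ia_{ij}c_j=\frac1{24}$. The ''additional order conditions'' are the extra conditions (due to Hager and Bonnans–Laurent-Varin) needed so that the Runge–Kutta discretization of an optimal control problem, in which the state is discretized with $(a_{ij},b_i)$ and the adjoint state with the scheme $\hat b_i=b_i$, $\hat a_{ij}=b_j-\frac{b_j}{b_i}a_{ji}$ (so that discretization and optimization commute), attains the corresponding order. *)

(* Defs.v *)
(* Coefficients live in an arbitrary real field R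
   (covers the reals; generalizes faithfully since all statements are algebraic). *)
From HB Require Import structures.
From mathcomp Require Import all_boot all_order all_algebra.
Set Implicit Arguments. Unset Strict Implicit. Unset Printing Implicit Defensive.
Import Order.TTheory GRing.Theory Num.Theory.
Local Open Scope ring_scope.

Definition rk_c (R : realFieldType) (s : nat) (a : 'I_s -> 'I_s -> R) (i : 'I_s) : R :=
  \sum_(j < s) a i j.
Definition rk_d (R : realFieldType) (s : nat) (a : 'I_s -> 'I_s -> R) (b : 'I_s -> R)
  (j : 'I_s) : R := \sum_(i < s) b i * a i j.

Definition D1 (R : realFieldType) (s : nat) (a : 'I_s -> 'I_s -> R) (b : 'I_s -> R) : Prop :=
  forall j : 'I_s, rk_d a b j = b j * (1 - rk_c a j).

Definition classical_order3 (R : realFieldType) (s : nat) (a : 'I_s -> 'I_s -> R)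
  (b : 'I_s -> R) : Prop :=
  [/\ \sum_(i < s) b i = 1,
      \sum_(i < s) rk_d a b i = 2^-1,
      \sum_(i < s) rk_c a i * rk_d a b i = 6^-1 &
      \sum_(i < s) b i * rk_c a i ^+ 2 = 3^-1].

Definition classical_order4 (R : realFieldType) (s : nat) (a : 'I_s -> 'I_s -> R)
  (b : 'I_s -> R) : Prop :=
  [/\ classical_order3 a b,
      \sum_(i < s) b i * rk_c a i ^+ 3 = 4^-1,
      \sum_(i < s) \sum_(j < s) b i * rk_c a i * a i j * rk_c a j = 8^-1,
      \sum_(i < s) rk_d a b i * rk_c a i ^+ 2 = 12^-1 &
      \sum_(i < s) \sum_(j < s) rk_d a b i * a i j * rk_c a j = 24^-1].

(* Main.v *)
Require Import Defs.
From HB Require Import structures.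
From mathcomp Require Import all_boot all_order all_algebra.
From mathcomp Require Import ring lra.
Import Order.TTheory GRing.Theory Num.Theory.
Local Open Scope ring_scope.

Lemma sumB (R : ringType) n (F G : 'I_n -> R) :
  \sum_(i < n) (F i - G i) = \sum_(i < n) F i - \sum_(i < n) G i.
Proof. by rewrite big_split /= sumrN. Qed.

Theorem mainTheorem1 (R : realFieldType) (s : nat)
  (a : 'I_s -> 'I_s -> R) (b : 'I_s -> R)
  (hb : forall i : 'I_s, b i != 0)
  (hD1 : D1 a b) :
  (classical_order3 a b ->
     \sum_(i < s) rk_d a b i ^+ 2 / b i = 3^-1)
  /\
  (classical_order4 a b ->
     [/\ \sum_(i < s) rk_c a i * (rk_d a b i ^+ 2 / b i) = 12^-1,
         \sum_(i < s) rk_d a b i ^+ 3 / b i ^+ 2 = 4^-1,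
         \sum_(i < s) \sum_(j < s) b i / b j * rk_c a i * a i j * rk_d a b j = 5 / 24 &
         \sum_(i < s) \sum_(j < s) rk_d a b i / b j * a i j * rk_d a b j = 8^-1]).
Proof.
have Hbc : forall (H3 : classical_order3 a b), \sum_(i < s) b i * rk_c a i = 2^-1.
  case=> h1 h2 _ _.
  have : \sum_(i < s) rk_d a b i = \sum_(i < s) (b i - b i * rk_c a i).
    apply: eq_bigr => i _; rewrite hD1; ring.
  rewrite sumB h1 h2 => E.
  have -> : \sum_(i < s) b i * rk_c a i = 1 - 2^-1 by rewrite E; ring.
  by field.
have P3 : classical_order3 a b -> \sum_(i < s) rk_d a b i ^+ 2 / b i = 3^-1.
  move=> H3; have E := Hbc H3; case: H3 => h1 h2 h3 h4.
  have -> : \sum_(i < s) rk_d a b i ^+ 2 / b i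
      = \sum_(i < s) (b i - (2 * (b i * rk_c a i) - b i * rk_c a i ^+ 2)).
    apply: eq_bigr => i _; rewrite hD1; field; rewrite ?hb //.
  rewrite sumB sumB -mulr_sumr E h1 h4; by field.
split; first exact: P3.
move=> H4.
have H4' := H4; case: H4' => H3 h5 h6 h7 h8.
have E := Hbc H3; have H3' := H3; case: H3' => h1 h2 h3 h4.
split.
- have -> : \sum_(i < s) rk_c a i * (rk_d a b i ^+ 2 / b i)
      = \sum_(i < s) (b i * rk_c a i - (2 * (b i * rk_c a i ^+ 2) - b i * rk_c a i ^+ 3)).
    apply: eq_bigr => i _; rewrite hD1; field; rewrite ?hb //.
  rewrite sumB sumB -mulr_sumr E h4 h5; by field.
- have -> : \sum_(i < s) rk_d a b i ^+ 3 / b i ^+ 2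
      = \sum_(i < s) (b i - (3 * (b i * rk_c a i) - (3 * (b i * rk_c a i ^+ 2) - b i * rk_c a i ^+ 3))).
    apply: eq_bigr => i _; rewrite hD1; field; rewrite ?hb //.
  rewrite !sumB -!mulr_sumr E h1 h4 h5; by field.
- have -> : \sum_(i < s) \sum_(j < s) b i / b j * rk_c a i * a i j * rk_d a b j
      = \sum_(i < s) (b i * rk_c a i ^+ 2 - \sum_(j < s) b i * rk_c a i * a i j * rk_c a j).
    apply: eq_bigr => i _.
    have -> : \sum_(j < s) b i / b j * rk_c a i * a i j * rk_d a b j
        = \sum_(j < s) (b i * rk_c a i * a i j - b i * rk_c a i * a i j * rk_c a j).
      apply: eq_bigr => j _; rewrite hD1; field; rewrite ?hb //.
    by rewrite sumB -mulr_sumr /rk_c; congr (_ - _); ring.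
  rewrite sumB h4 h6; by field.
- have -> : \sum_(i < s) \sum_(j < s) rk_d a b i / b j * a i j * rk_d a b j
      = \sum_(i < s) (rk_c a i * rk_d a b i - \sum_(j < s) rk_d a b i * a i j * rk_c a j).
    apply: eq_bigr => i _.
    have -> : \sum_(j < s) rk_d a b i / b j * a i j * rk_d a b j
        = \sum_(j < s) (rk_d a b i * a i j - rk_d a b i * a i j * rk_c a j).
      apply: eq_bigr => j _; rewrite [X in _ * X]hD1; field; rewrite ?hb //.
    by rewrite sumB -mulr_sumr /rk_c; congr (_ - _); ring.
  rewrite sumB h3 h8; by field.
Qed.
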